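(* For every integer $n\geq 1$, $$\sum_{k=1}^{n}E_{2k-2}E_{2n-2k}=\frac2n\sum_{k=1}^{n}\frac{B_{2k}B_{2n-2k}}{k}\big(2^{2k}-1\big)2^{2k-1}\big(1-2^{2n-2k-1}\big)\binom{2n}{2k}.$$
   Context: $B_n$ denotes the Bernoulli numbers, defined by $\frac{x}{e^x-1}=\sum_{n\ge 0}B_n\frac{x^n}{n!}$ (so $B_0=1$). $E_n$ denotes the Euler numbers, defined by $\operatorname{sech} x=\sum_{n\ge0}E_n\frac{x^n}{n!}$ (so $E_0=1$, $E_2=-1$, $E_4=5,\dots$). *)

(* Defs.v *)
From mathcomp Require Import all_boot all_order all_algebra.
Set Implicit Arguments. Unset Strict Implicit. Unset Printing Implicit Defensive.
Import Order.TTheory GRing.Theory Num.Theory.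
Local Open Scope ring_scope.

(* Bernoulli numbers, x/(e^x-1) = sum B_n x^n/n!.  Equivalently, as formal
   power series, ((e^x-1)/x) * (sum_n B_n x^n/n!) = 1, i.e. for every n
     sum_{k=0}^n B_k/k! * 1/(n-k+1)! = [n == 0]. *)
Fixpoint bern_seq (n : nat) : seq rat :=
  if n is n'.+1 then
    let s := bern_seq n' in
    rcons s (- (n`!)%:R * \sum_(k < n) s`_k / (k`!)%:R / ((n - k).+1`!)%:R)
  else [:: 1].

Definition bernoulli (n : nat) : rat := (bern_seq n)`_n.

(* Euler numbers, sech x = sum E_n x^n/n!, i.e. cosh x * (sum E_n x^n/n!) = 1:
   for every n,  sum_{k=0}^n E_k/k! * c_{n-k} = [n == 0]  where
   c_j = 1/j! if j is even and 0 otherwise (coefficients of cosh). *)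
Definition cosh_coef (j : nat) : rat := if odd j then 0 else 1 / (j`!)%:R.

Fixpoint euler_seq (n : nat) : seq rat :=
  if n is n'.+1 then
    let s := euler_seq n' in
    rcons s (- (n`!)%:R * \sum_(k < n) s`_k / (k`!)%:R * cosh_coef (n - k))
  else [:: 1].

Definition euler (n : nat) : rat := (euler_seq n)`_n.

(* Main.v *)
Require Import Defs.
From mathcomp Require Import all_boot all_order all_algebra zify ring.
From Stdlib Require Import Ring_theory Ring FunctionalExtensionality.
Import Order.TTheory GRing.Theory Num.Theory.
Set Implicit Arguments. Unset Strict Implicit.
Local Open Scope ring_scope.

Definition ser := nat -> rat.
Definition sadd (f g : ser) : ser := fun n => f n + g n.
Definition sopp (f : ser) : ser := fun n => - f n.
Definition ssub (f g : ser) : ser := fun n => f n - g n.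
Definition smul (f g : ser) : ser := fun n => \sum_(i < n.+1) f i * g (n - i)%N.
Definition s0 : ser := fun _ => 0.
Definition s1 : ser := fun n => (n == 0)%:R.

Lemma sext (f g : ser) : (forall n, f n = g n) -> f = g.
Proof. exact: functional_extensionality. Qed.

Definition tr (N : nat) (f : ser) : {poly rat} := \poly_(i < N) f i.

Lemma smul_poly f g N n : (n < N)%N -> smul f g n = (tr N f * tr N g)`_n.
Proof.
move=> hn; rewrite coefM; apply: eq_bigr => i _; rewrite !coef_poly.
have h1 : (i < N)%N by have := ltn_ord i; lia.
have h2 : (n - i < N)%N by lia.
by rewrite h1 h2.
Qed.

Lemma eq_coefMl (p p' q : {poly rat}) n :
  (forall i, (i <= n)%N -> p`_i = p'`_i) -> (p * q)`_n = (p' * q)`_n.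
Proof.
move=> h; rewrite !coefM; apply: eq_bigr => i _; rewrite h //.
by have := ltn_ord i; lia.
Qed.

Lemma eq_coefMr (p p' q : {poly rat}) n :
  (forall i, (i <= n)%N -> p`_i = p'`_i) -> (q * p)`_n = (q * p')`_n.
Proof. by move=> h; rewrite mulrC (eq_coefMl q h) mulrC. Qed.

Lemma tr_smul f g N i : (i < N)%N -> (tr N (smul f g))`_i = (tr N f * tr N g)`_i.
Proof. by move=> h; rewrite coef_poly h (smul_poly f g h). Qed.

Lemma smulA f g h : smul f (smul g h) = smul (smul f g) h.
Proof.
apply: sext => n; rewrite (smul_poly f _ (ltnSn n)) (smul_poly (smul f g) h (ltnSn n)).
rewrite (@eq_coefMr (tr n.+1 (smul g h)) (tr n.+1 g * tr n.+1 h)); last first.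
  by move=> i hi; apply: tr_smul; lia.
rewrite (@eq_coefMl (tr n.+1 (smul f g)) (tr n.+1 f * tr n.+1 g)); last first.
  by move=> i hi; apply: tr_smul; lia.
by rewrite mulrA.
Qed.

Lemma smulC f g : smul f g = smul g f.
Proof.
by apply: sext => n; rewrite (smul_poly f g (ltnSn n)) (smul_poly g f (ltnSn n)) mulrC.
Qed.

Lemma tr_s1 N : (0 < N)%N -> tr N s1 = 1.
Proof.
move=> hN; apply/polyP => i; rewrite coef_poly coef1.
case: i => [|i] /=; first by rewrite hN.
by case: ifP.
Qed.

Lemma smul1 f : smul s1 f = f.
Proof.
apply: sext => n; rewrite (smul_poly s1 f (ltnSn n)) tr_s1 // mul1r coef_poly ltnSn //.
Qed.

Lemma tr_sadd N f g : tr N (sadd f g) = tr N f + tr N g.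
Proof. by apply/polyP => i; rewrite coefD !coef_poly; case: ifP; rewrite ?addr0. Qed.

Lemma smulDl f g h : smul (sadd f g) h = sadd (smul f h) (smul g h).
Proof.
apply: sext => n; rewrite /sadd !(smul_poly _ h (ltnSn n)) tr_sadd mulrDl coefD //.
Qed.

Definition ser_rt : ring_theory s0 s1 sadd smul ssub sopp (@eq ser).
Proof.
constructor.
- by move=> f; apply: sext => n; rewrite /sadd /s0 add0r.
- by move=> f g; apply: sext => n; rewrite /sadd addrC.
- by move=> f g h; apply: sext => n; rewrite /sadd addrA.
- exact: smul1.
- exact: smulC.
- exact: smulA.
- exact: smulDl.
- by [].
- by move=> f; apply: sext => n; rewrite /sadd /sopp /s0 subrr.
Qed.

Add Ring serRing : ser_rt.

Declare Scope ser_scope. Delimit Scope ser_scope with ser.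
Notation "f + g" := (sadd f g) : ser_scope.
Notation "f - g" := (ssub f g) : ser_scope.
Notation "- f" := (sopp f) : ser_scope.
Notation "f * g" := (smul f g) : ser_scope.

Definition sC (c : rat) : ser := fun n => if n == 0%N then c else 0.
Definition sX : ser := fun n => (n == 1%N)%:R.
Definition sD (f : ser) : ser := fun n => f n.+1 * n.+1%:R.
Definition sscale (a : rat) (f : ser) : ser := fun n => a ^+ n * f n.
Definition sexp (a : rat) : ser := fun n => a ^+ n / n`!%:R.

Lemma smulCl c f n : smul (sC c) f n = c * f n.
Proof.
rewrite /smul big_ord_recl /= subn0 big1 ?addr0 // => i _.
by rewrite /sC /= mul0r.
Qed.

Lemma smulCr c f n : smul f (sC c) n = f n * c.
Proof. by rewrite smulC smulCl mulrC. Qed.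

Lemma smulXl f n : smul sX f n = if n is m.+1 then f m else 0.
Proof.
case: n => [|m].
  by rewrite /smul big_ord1 /sX /= mul0r.
rewrite /smul big_ord_recl /sX /= mul0r add0r big_ord_recl /= mul1r subSS subn0.
rewrite big1 ?addr0 // => i _; by rewrite mul0r.
Qed.

Lemma sC1 : sC 1 = s1.
Proof. by apply: sext => -[|n]. Qed.

Lemma sCD a b : sC (a + b) = (sC a + sC b)%ser.
Proof. by apply: sext => -[|n]; rewrite /sC /sadd //= addr0. Qed.

Lemma sCM a b : sC (a * b) = (sC a * sC b)%ser.
Proof. by apply: sext => n; rewrite smulCl /sC; case: (n == 0%N); rewrite ?mulr0. Qed.

Lemma sC2 : sC 2 = (s1 + s1)%ser.
Proof. by rewrite -sC1 -sCD. Qed.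

Lemma sX_cancel f g : (sX * f)%ser = (sX * g)%ser -> f = g.
Proof.
move=> h; apply: sext => n.
by have := congr1 (fun s => s n.+1) h; rewrite /= !smulXl.
Qed.

Lemma two_cancel f g : ((s1 + s1) * f)%ser = ((s1 + s1) * g)%ser -> f = g.
Proof.
rewrite -sC2 => h; apply: sext => n.
have := congr1 (fun s => s n) h; rewrite /= !smulCl => /eqP.
by rewrite (inj_eq (mulfI _)) // => /eqP.
Qed.

Lemma sD_poly f N n : (n.+1 < N)%N -> sD f n = (deriv (tr N f))`_n.
Proof. by move=> h; rewrite coef_deriv coef_poly h /sD mulr_natr. Qed.

Lemma sD_mul f g : sD (f * g)%ser = (sD f * g + f * sD g)%ser.
Proof.
apply: sext => n; rewrite /sadd.
rewrite (sD_poly (f * g)%ser (ltnSn n.+1)).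
have -> : deriv (tr n.+2 (f * g)%ser) =
   deriv (tr n.+2 f) * tr n.+2 g + tr n.+2 f * deriv (tr n.+2 g) + deriv (tr n.+2 (f*g)%ser - tr n.+2 f * tr n.+2 g) by rewrite derivB derivM addrC subrK.
rewrite !coefD.
have -> : (deriv (tr n.+2 (f * g)%ser - tr n.+2 f * tr n.+2 g))`_n = 0.
  rewrite coef_deriv coefB coef_poly ltnSn (smul_poly f g (ltnSn n.+1)) subrr.
  by rewrite mul0rn.
rewrite addr0 (smul_poly (sD f) g (ltnW (ltnSn n.+1))) (smul_poly f (sD g) (ltnW (ltnSn n.+1))).
congr (_ + _).
  apply: eq_coefMl => i hi.
  have h1 : (i.+1 < n.+2)%N by lia.
  have h2 : (i < n.+2)%N by lia.
  by rewrite -(sD_poly f h1) coef_poly h2.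
apply: eq_coefMr => i hi.
have h1 : (i.+1 < n.+2)%N by lia.
have h2 : (i < n.+2)%N by lia.
by rewrite -(sD_poly g h1) coef_poly h2.
Qed.

Lemma sD_add f g : sD (f + g)%ser = (sD f + sD g)%ser.
Proof. by apply: sext => n; rewrite /sD /sadd mulrDl. Qed.
Lemma sD_opp f : sD (- f)%ser = (- sD f)%ser.
Proof. by apply: sext => n; rewrite /sD /sopp mulNr. Qed.
Lemma sD_sub f g : sD (f - g)%ser = (sD f - sD g)%ser.
Proof. by apply: sext => n; rewrite /sD /ssub mulrBl. Qed.
Lemma sD_C c : sD (sC c) = s0.
Proof. by apply: sext => n; rewrite /sD /sC /= mul0r. Qed.
Lemma sD_1 : sD s1 = s0.
Proof. by rewrite -sC1 sD_C. Qed.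
Lemma sD_X : sD sX = s1.
Proof. by apply: sext => -[|n]; rewrite /sD /sX /s1 //= mul0r. Qed.
Lemma smul0C f : (sC 0 * f)%ser = s0.
Proof. by apply: sext => n; rewrite smulCl mul0r. Qed.

Lemma fact_neq0 n : (n`!%:R : rat) != 0.
Proof. by rewrite pnatr_eq0 -lt0n fact_gt0. Qed.

Lemma sD_exp a : sD (sexp a) = (sC a * sexp a)%ser.
Proof.
apply: sext => n; rewrite smulCl /sD /sexp factS natrM exprS.
have h1 := fact_neq0 n.
have h2 : (n.+1%:R : rat) != 0 by rewrite pnatr_eq0.
by field; rewrite h1 nat1r.
Qed.

Lemma sexp0 a : sexp a 0 = 1.
Proof. by rewrite /sexp expr0 fact0 divr1. Qed.

Lemma ode_uniq a f g : sD f = (sC a * f)%ser -> sD g = (sC a * g)%ser ->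
  f 0%N = g 0%N -> f = g.
Proof.
move=> hf hg h0; apply: sext; elim=> // n IH.
have := congr1 (fun s => s n) hf; have := congr1 (fun s => s n) hg.
rewrite /= !smulCl /sD -IH => <- /eqP.
by rewrite (inj_eq (mulIf _)) ?pnatr_eq0 // => /eqP.
Qed.

Definition E1 := sexp 1.
Definition Em := sexp (-1).

Lemma E1Em : (E1 * Em)%ser = s1.
Proof.
apply: (@ode_uniq 0).
- rewrite sD_mul /E1 /Em !sD_exp smul0C.
  have -> : sC (-1) = (- sC 1)%ser by apply: sext => -[|n]; rewrite /sC /sopp //= oppr0.
  ring.
- by rewrite sD_1 smul0C.
- by rewrite /E1 /smul big_ord1 !sexp0 mulr1.
Qed.

Lemma sexp2 : sexp 2 = (E1 * E1)%ser.
Proof.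
apply: (@ode_uniq 2).
- by rewrite sD_exp.
- by rewrite sD_mul /E1 sD_exp sC2 sC1; ring.
- by rewrite /smul big_ord1 !sexp0 mulr1.
Qed.

Lemma sscale_mul a f g : sscale a (f * g)%ser = (sscale a f * sscale a g)%ser.
Proof.
apply: sext => n; rewrite /sscale /smul mulr_sumr; apply: eq_bigr => i _.
have hi : (i <= n)%N by have := ltn_ord i; lia.
by rewrite -{1}(subnKC hi) exprD; field.
Qed.
Lemma sscale_add a f g : sscale a (f + g)%ser = (sscale a f + sscale a g)%ser.
Proof. by apply: sext => n; rewrite /sscale /sadd mulrDr. Qed.
Lemma sscale_sub a f g : sscale a (f - g)%ser = (sscale a f - sscale a g)%ser.
Proof. by apply: sext => n; rewrite /sscale /ssub mulrBr. Qed.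
Lemma sscale_C a c : sscale a (sC c) = sC c.
Proof. by apply: sext => -[|n]; rewrite /sscale /sC /= ?expr0 ?mul1r ?mulr0. Qed.
Lemma sscale_1 a : sscale a s1 = s1.
Proof. by rewrite -sC1 sscale_C. Qed.
Lemma sscale_X a : sscale a sX = (sC a * sX)%ser.
Proof. by apply: sext => -[|[|n]]; rewrite smulCl /sscale /sX /= ?mulr0 ?mulr1 ?expr1. Qed.
Lemma sscale_exp a b : sscale a (sexp b) = sexp (a * b).
Proof. by apply: sext => n; rewrite /sscale /sexp exprMn mulrA. Qed.

Lemma size_bern n : size (bern_seq n) = n.+1.
Proof. by elim: n => //= n IH; rewrite size_rcons IH. Qed.

Lemma bern_nth n k : (k <= n)%N -> (bern_seq n)`_k = bernoulli k.
Proof.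
elim: n => [|n IH] hk; first by have -> : k = 0%N by lia.
case: (ltnP k n.+1) => h.
  by rewrite /= nth_rcons size_bern h IH.
by have -> : k = n.+1 by lia.
Qed.

Lemma bern_rec n : bernoulli n.+1 = - (n.+1`!)%:R *
  \sum_(k < n.+1) bernoulli k / (k`!)%:R / ((n.+1 - k).+1`!)%:R.
Proof.
rewrite {1}/bernoulli /= nth_rcons size_bern ltnn eqxx; congr (_ * _).
by apply: eq_bigr => k _; rewrite bern_nth //; have := ltn_ord k; lia.
Qed.

Definition sbeta : ser := fun n => bernoulli n / n`!%:R.
Definition sd : ser := fun n => 1 / (n.+1`!)%:R.

Lemma sd_beta : (sd * sbeta)%ser = s1.
Proof.
rewrite smulC; apply: sext => -[|m].
  by rewrite /smul big_ord1 /sbeta /sd /bernoulli /s1 /= subnn fact0 !divr1.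
rewrite /smul /= big_ord_recr /= subnn /sd /sbeta.
have -> : \sum_(i < m.+1) bernoulli i / (i`!)%:R * (1 / ((m.+1 - i).+1`!)%:R)
  = \sum_(k < m.+1) bernoulli k / (k`!)%:R / ((m.+1 - k).+1`!)%:R.
  by apply: eq_bigr => i _; rewrite mul1r.
have h := fact_neq0 m.+1.
have -> : \sum_(k < m.+1) bernoulli k / (k`!)%:R / ((m.+1 - k).+1`!)%:R
   = - bernoulli m.+1 / (m.+1`!)%:R.
  by rewrite bern_rec; field.
rewrite /s1 /=; have -> : (1`!)%:R = 1 :> rat by []. by rewrite mul1r invr1 mulr1 mulNr addNr mulr0n.
Qed.

Lemma size_euler n : size (euler_seq n) = n.+1.
Proof. by elim: n => //= n IH; rewrite size_rcons IH. Qed.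

Lemma euler_nth n k : (k <= n)%N -> (euler_seq n)`_k = euler k.
Proof.
elim: n => [|n IH] hk; first by have -> : k = 0%N by lia.
case: (ltnP k n.+1) => h.
  by rewrite /= nth_rcons size_euler h IH.
by have -> : k = n.+1 by lia.
Qed.

Lemma euler_rec n : euler n.+1 = - (n.+1`!)%:R *
  \sum_(k < n.+1) euler k / (k`!)%:R * cosh_coef (n.+1 - k).
Proof.
rewrite {1}/euler /= nth_rcons size_euler ltnn eqxx; congr (_ * _).
by apply: eq_bigr => k _; rewrite euler_nth //; have := ltn_ord k; lia.
Qed.

Definition se : ser := fun n => euler n / n`!%:R.
Definition sch : ser := cosh_coef.
Definition ssh : ser := fun n => if odd n then 1 / n`!%:R else 0.

Lemma sch_se : (sch * se)%ser = s1.
Proof.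
rewrite smulC; apply: sext => -[|m].
  by rewrite /smul big_ord1 /se /sch /cosh_coef /euler /s1 /= fact0 mulr1n !divr1 ?mulr1.
rewrite /smul /= big_ord_recr /= subnn /sch /se.
have h := fact_neq0 m.+1.
have -> : \sum_(k < m.+1) euler k / (k`!)%:R * cosh_coef (m.+1 - k)
   = - euler m.+1 / (m.+1`!)%:R.
  by rewrite euler_rec; field.
rewrite /s1 /cosh_coef /= fact0 mulr1n mulr0n divr1 mulr1 mulNr addNr //.
Qed.

Lemma euler_odd n : odd n -> euler n = 0.
Proof.
elim/ltn_ind: n => -[|n] IH //= hn.
rewrite euler_rec big1 ?mulr0 // => k _.
have hk : (k < n.+1)%N := ltn_ord k.
case hok: (odd k).
  by rewrite IH ?mul0r //; lia.
rewrite /cosh_coef.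
have -> : odd (n.+1 - k) by rewrite oddB ?hok /= ?hn //; lia.
by rewrite mulr0.
Qed.

Lemma E1_ch_sh : E1 = (sch + ssh)%ser.
Proof.
apply: sext => n; rewrite /E1 /sexp /sadd /sch /ssh /cosh_coef expr1n.
by case: (odd n); rewrite ?add0r ?addr0.
Qed.

Lemma Em_ch_sh : Em = (sch - ssh)%ser.
Proof.
apply: sext => n; rewrite /Em /sexp /ssub /sch /ssh /cosh_coef -signr_odd.
by case: (odd n); rewrite ?subr0 ?sub0r ?expr0 ?expr1 ?mulN1r ?mul1r.
Qed.

Definition w (i j : nat) : rat := (i`! * j`!)%:R / ((i + j).+1`!)%:R.
Definition J (f g : ser) : ser := fun n =>
  if n is m.+1 then \sum_(i < m.+1) f i * g (m - i)%N * w i (m - i) else 0.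

Lemma JDl f g h : J (f + g)%ser h = (J f h + J g h)%ser.
Proof.
apply: sext => -[|n]; rewrite /J /sadd ?addr0 //.
by rewrite -big_split; apply: eq_bigr => i _; rewrite /sadd !mulrDl.
Qed.
Lemma JDr f g h : J h (f + g)%ser = (J h f + J h g)%ser.
Proof.
apply: sext => -[|n]; rewrite /J /sadd ?addr0 //.
by rewrite -big_split; apply: eq_bigr => i _; rewrite /sadd mulrDr mulrDl.
Qed.
Lemma JNl f g : J (- f)%ser g = (- J f g)%ser.
Proof.
apply: sext => -[|n]; rewrite /J /sopp ?oppr0 //.
by rewrite -sumrN; apply: eq_bigr => i _; rewrite !mulNr.
Qed.
Lemma JNr f g : J g (- f)%ser = (- J g f)%ser.
Proof.
apply: sext => -[|n]; rewrite /J /sopp ?oppr0 //.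
by rewrite -sumrN; apply: eq_bigr => i _; rewrite mulrN mulNr.
Qed.
Lemma JCr c f g : J f (sC c * g)%ser = (sC c * J f g)%ser.
Proof.
apply: sext => -[|n]; rewrite smulCl /J ?mulr0 //.
by rewrite mulr_sumr; apply: eq_bigr => i _; rewrite smulCl; field.
Qed.

Lemma w_step i k : w i k.+1 * (i + k).+2%:R = k.+1%:R * w i k.
Proof.
have e1 : (((i + k).+2)`!%:R : rat) = (i + k).+2%:R * ((i + k).+1`!)%:R.
  by rewrite factS natrM.
have e2 : ((i`! * k.+1`!)%:R : rat) = k.+1%:R * (i`! * k`!)%:R.
  by rewrite factS mulnCA natrM.
rewrite /w addnS e1 e2.
have h1 := fact_neq0 (i + k).+1.
have h2 : ((i + k).+2%:R : rat) != 0 by rewrite pnatr_eq0.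
move: h1 h2; set x := (((i + k).+1)`!)%:R; set y := ((i + k).+2)%:R; set z := (i`! * k`!)%:R.
clearbody x y z => h1 h2.
by field; rewrite h1 h2.
Qed.

Lemma w_last m : w m 0 * m.+1%:R = 1.
Proof.
rewrite /w addn0 factS fact0 muln1 natrM.
have h1 := fact_neq0 m.
have h2 : (m.+1%:R : rat) != 0 by rewrite pnatr_eq0.
by field; rewrite h1 nat1r h2.
Qed.

Lemma sD_J f g : sD (J f g) = (f * sC (g 0%N) + J f (sD g))%ser.
Proof.
apply: sext => -[|m].
  have w00 : w 0 0 = 1 by rewrite /w /= divr1.
  by rewrite /sadd /sD /= smulCr /J big_ord1 /= subnn w00 !mulr1 addr0.
rewrite /sadd /sD /= smulCr big_ord_recr /= subnn mulrDl addrC; congr (_ + _).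
  by rewrite -mulrA w_last mulr1.
rewrite mulr_suml; apply: eq_bigr => i _.
have hi : (i <= m)%N by have := ltn_ord i; lia.
rewrite subSn //.
have -> : (m.+2 = (i + (m - i)).+2)%N by lia.
rewrite -mulrA w_step; by field.
Qed.

Lemma smul_at0 f g : (f * g)%ser 0%N = f 0%N * g 0%N.
Proof. by rewrite /smul big_ord1. Qed.

Lemma J_exp a f g : (sexp a * J f g)%ser = J (sexp a * f)%ser (sexp a * g)%ser.
Proof.
apply: sext => N; elim: N g => [|N IH] g.
  by rewrite smul_at0 /J mulr0.
set L := fun g => (sexp a * J f g)%ser.
set R := fun g => J (sexp a * f)%ser (sexp a * g)%ser.
have key : sD (L g) = (sD (R g) + sC a * (L g - R g) + (L (sD g) - R (sD g)))%ser.
  rewrite /L /R sD_mul sD_exp !sD_J sD_mul sD_exp JDr -[(sC a * sexp a * g)%ser]smulA JCr.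
  rewrite (smul_at0 (sexp a) g) sexp0 mul1r.
  ring.
have H := congr1 (fun s => s N) key; simpl in H.
move: H; rewrite /sadd /ssub smulCl /L /R -!IH !subrr mulr0 !addr0 /sD => /eqP.
by rewrite (inj_eq (mulIf _)) ?pnatr_eq0 // => /eqP.
Qed.

Lemma unit_cancel u v f g : (u * v)%ser = s1 -> (u * f)%ser = (u * g)%ser -> f = g.
Proof.
move=> huv hf.
have -> : f = (v * (u * f))%ser by rewrite smulA (smulC v u) huv smul1.
by rewrite hf smulA (smulC v u) huv smul1.
Qed.

Lemma hXd : (sX * sd)%ser = (E1 - s1)%ser.
Proof.
apply: sext => n; rewrite smulXl /ssub /E1 /sexp /s1.
case: n => [|m] /=; first by rewrite expr0 fact0 divr1 subrr.
by rewrite expr1n subr0 /sd.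
Qed.

Definition sP := sscale 2 sd.
Definition sb2 := sscale 2 sbeta.
Definition sQ := sscale 2 sP.
Definition sb4 := sscale 2 sb2.

Lemma hPb : (sP * sb2)%ser = s1.
Proof. by rewrite /sP /sb2 -sscale_mul sd_beta sscale_1. Qed.
Lemma hQb : (sQ * sb4)%ser = s1.
Proof. by rewrite /sQ /sb4 -sscale_mul hPb sscale_1. Qed.

Lemma sscale2E1 : sscale 2 E1 = (E1 * E1)%ser.
Proof. by rewrite -sexp2 /E1 sscale_exp mulr1. Qed.

Lemma hXP : ((s1 + s1) * sX * sP)%ser = (E1 * E1 - s1)%ser.
Proof.
have := congr1 (sscale 2) hXd.
by rewrite sscale_mul sscale_X sscale_sub sscale_1 sscale2E1 sC2.
Qed.

Lemma hXQ : ((s1 + s1) * (s1 + s1) * sX * sQ)%ser = (E1 * E1 * (E1 * E1) - s1)%ser.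
Proof.
have := congr1 (sscale 2) hXP.
rewrite !sscale_mul sscale_add sscale_1 sscale_X sscale_sub sscale_1 sscale_mul sscale2E1 sC2.
move=> h; rewrite -h /sQ; ring.
Qed.

Lemma hS : ((s1 + s1) * ssh)%ser = (E1 - Em)%ser.
Proof. rewrite E1_ch_sh Em_ch_sh; ring. Qed.
Lemma hC : ((s1 + s1) * sch)%ser = (E1 + Em)%ser.
Proof. rewrite E1_ch_sh Em_ch_sh; ring. Qed.

Definition sr := (sbeta + sbeta - sb2)%ser.

Lemma sh_r : (ssh * sr)%ser = sX.
Proof.
apply: (unit_cancel sd_beta); apply: (unit_cancel hPb).
apply: two_cancel; apply: sX_cancel; apply: sX_cancel.
transitivity (sX * ssh * ((s1 + s1) * (sP + sP) * (sX * (sd * sbeta))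
                          - (s1 + s1) * sd * (sX * (sP * sb2))))%ser.
  rewrite /sr; ring.
rewrite sd_beta hPb.
transitivity (sX * ssh * ((s1 + s1) * ((s1 + s1) * sX * sP) - (s1 + s1) * (sX * sd)))%ser.
  ring.
rewrite hXP hXd.
transitivity (sX * ((s1 + s1) * ssh) * (E1 * E1 - E1))%ser.
  ring.
rewrite hS.
transitivity (sX * (E1 * E1 * E1 - E1 * E1 - E1 * (E1 * Em) + (E1 * Em)))%ser.
  ring.
rewrite E1Em.
transitivity (sX * (sX * sd) * ((s1 + s1) * sX * sP))%ser; last by ring.
rewrite hXP hXd; ring.
Qed.

Definition su := (sb4 - sb2 + sX)%ser.
Definition st := (ssh * se)%ser.

Lemma ch_u : (sch * su)%ser = (sX * ssh)%ser.
Proof.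
apply: (unit_cancel hPb); apply: (unit_cancel hQb).
apply: two_cancel; apply: two_cancel; apply: two_cancel; apply: two_cancel.
apply: sX_cancel.
transitivity (sch * ((s1 + s1) * (s1 + s1) * (s1 + s1) * (s1 + s1) * sX * (sP * (sQ * sb4)))
   - sch * ((s1 + s1) * (s1 + s1) * (s1 + s1) * (s1 + s1) * sX * (sQ * (sP * sb2)))
   + sch * ((s1 + s1) * (s1 + s1) * (s1 + s1) * (s1 + s1) * sX * sX * sP * sQ))%ser.
  rewrite /su; ring.
rewrite hQb hPb.
transitivity (((s1 + s1) * sch) * ((s1 + s1) * (s1 + s1) * ((s1 + s1) * sX * sP)
   - (s1 + s1) * ((s1 + s1) * (s1 + s1) * sX * sQ)
   + ((s1 + s1) * sX * sP) * ((s1 + s1) * (s1 + s1) * sX * sQ)))%ser.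
  ring.
rewrite hXP hXQ hC.
transitivity (((s1 + s1) * ssh) * ((s1 + s1) * sX * sP) * ((s1 + s1) * (s1 + s1) * sX * sQ))%ser;
  last by ring.
rewrite hXP hXQ hS.
transitivity ((E1 - Em) * ((E1 * E1 - s1) * (E1 * E1 * (E1 * E1) - s1))
  + (s1 + s1) * E1 * (E1 * E1 - s1) * (E1 * E1 - s1) * (E1 * Em - s1))%ser.
  ring.
rewrite E1Em; ring.
Qed.

Lemma X_t : (sX * st)%ser = su.
Proof.
transitivity (se * (sch * su))%ser; last by rewrite smulA (smulC se sch) sch_se smul1.
by rewrite ch_u /st; ring.
Qed.

Definition sl : ser := fun n => st n / n.+1%:R.
Definition sk : ser := fun m => (\sum_(i < m.+1) euler i * euler (m - i)%N) / (m.+1`!)%:R.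
Definition sq : ser := fun n => if odd n then 0 else 1 / (n.+1`!)%:R.

Lemma w0 m : w 0 m = 1 / m.+1%:R.
Proof.
rewrite /w add0n fact0 mul1n factS natrM.
have h1 := fact_neq0 m.
have h2 : (m.+1%:R : rat) != 0 by rewrite pnatr_eq0.
move: h1 h2; set x := (m`!)%:R; set y := (m.+1)%:R; clearbody x y => h1 h2.
by field; rewrite h1 h2.
Qed.

Lemma wm0 m : w m 0 = 1 / m.+1%:R.
Proof.
rewrite /w addn0 fact0 muln1 factS natrM.
have h1 := fact_neq0 m.
have h2 : (m.+1%:R : rat) != 0 by rewrite pnatr_eq0.
move: h1 h2; set x := (m`!)%:R; set y := (m.+1)%:R; clearbody x y => h1 h2.
by field; rewrite h1 h2.
Qed.

Lemma J1t : J s1 st = (sX * sl)%ser.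
Proof.
apply: sext => -[|m]; rewrite smulXl /J //.
rewrite big_ord_recl /= subn0 big1 ?addr0; last by move=> i _; rewrite /s1 /= !mul0r.
by rewrite /s1 /= mulr1n mul1r w0 /sl mul1r.
Qed.

Lemma Jt1 : J st s1 = (sX * sl)%ser.
Proof.
apply: sext => -[|m]; rewrite smulXl /J //.
rewrite big_ord_recr /= subnn big1 ?add0r; last first.
  move=> i _; have hi := ltn_ord i.
  by rewrite /s1 (_ : (m - i == 0)%N = false) ?mulr0 ?mul0r //; apply/negbTE; lia.
by rewrite /s1 /= mulr1 wm0 /sl mul1r.
Qed.

Lemma Jee : J se se = (sX * sk)%ser.
Proof.
apply: sext => -[|m]; rewrite smulXl /J //.
rewrite /sk mulr_suml; apply: eq_bigr => i _.
have hi : (i <= m)%N by have := ltn_ord i; lia.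
rewrite /se /w natrM.
have h1 := fact_neq0 i; have h2 := fact_neq0 (m - i).
rewrite (_ : (i + (m - i))%N = m); last by lia.
have h3 := fact_neq0 m.+1.
move: h1 h2 h3; set x := (i`!)%:R; set y := ((m - i)`!)%:R; set z := (m.+1`!)%:R.
clearbody x y z => h1 h2 h3.
by field; rewrite h1 h2 h3.
Qed.

Lemma sh_q : ssh = (sX * sq)%ser.
Proof.
apply: sext => -[|m]; rewrite smulXl /ssh //=.
by rewrite /sq; case: (odd m).
Qed.

Lemma q_r : (sq * sr)%ser = s1.
Proof.
apply: sX_cancel; rewrite smulA -sh_q sh_r; ring.
Qed.

Lemma E1se : (E1 * se)%ser = (s1 + st)%ser.
Proof. by rewrite E1_ch_sh smulDl sch_se. Qed.
Lemma Emse : (Em * se)%ser = (s1 - st)%ser.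
Proof. rewrite Em_ch_sh -sch_se /st; ring. Qed.

Lemma ssubE f g : (f - g)%ser = (f + - g)%ser.
Proof. by []. Qed.

Lemma key_J : ((E1 - Em) * J se se)%ser = ((s1 + s1) * (J s1 st + J st s1))%ser.
Proof.
transitivity (E1 * J se se - Em * J se se)%ser; first by ring.
rewrite !J_exp E1se Emse !ssubE !JDl !JDr !JNl !JNr; ring.
Qed.

Lemma sk_eq : (sX * sk)%ser = ((s1 + s1) * (sr * sl))%ser.
Proof.
have h := key_J.
rewrite -hS Jee J1t Jt1 sh_q in h.
have h2 : (sq * (sX * sk))%ser = ((s1 + s1) * sl)%ser.
  apply: sX_cancel; apply: two_cancel.
  transitivity ((s1 + s1) * (sX * sq) * (sX * sk))%ser; first by ring.
  rewrite h; ring.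
transitivity ((sr * sq) * (sX * sk))%ser; first by rewrite (smulC sr) q_r; ring.
rewrite -smulA h2; ring.
Qed.

Lemma conv_formula m : \sum_(i < m.+1) euler i * euler (m - i)%N
  = (m.+1`!)%:R * (2 * \sum_(i < m.+2) sr i * sl (m.+1 - i)%N).
Proof.
have := congr1 (fun s => s m.+1) sk_eq.
rewrite /= smulXl -sC2 smulCl /sk => <-.
have := fact_neq0 m.+1; set x := (m.+1`!)%:R; clearbody x => hx.
by field.
Qed.

Lemma sl_su a : sl (2 * a).+1 = su (2 * a).+2 / (2 * a).+2%:R.
Proof.
have := congr1 (fun s => s (2 * a).+2) X_t.
by rewrite /= smulXl /sl => ->.
Qed.

Lemma su_val a : su (2 * a).+2 =
  2 ^+ (2 * a).+2 * (2 ^+ (2 * a).+2 * sbeta (2 * a).+2) - 2 ^+ (2 * a).+2 * sbeta (2 * a).+2.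
Proof. by rewrite /su /sadd /ssub /sb4 /sb2 /sscale /sX /= addr0. Qed.

Lemma sr_val j : sr (2 * j) = sbeta (2 * j) + sbeta (2 * j) - 2 ^+ (2 * j) * sbeta (2 * j).
Proof. by []. Qed.

Lemma pow2z j : (2 : rat) ^ ((2 * j)%:Z - 1) = 2 ^+ (2 * j) / 2.
Proof. by rewrite expfzDr // exprN1 -exprnP. Qed.

Lemma term_eq j a :
  ((2 * (j + a)).+1`!)%:R * (2 * (sr (2 * j) * sl (2 * a).+1)) =
  2 / (j + a).+1%:R * (bernoulli (2 * a.+1) * bernoulli (2 * j) / a.+1%:R
     * (2 ^+ (2 * a.+1) - 1) * 2 ^+ (2 * a.+1 - 1)
     * (1 - (2 : rat) ^ ((2 * j)%:Z - 1)) * ('C(2 * (j + a).+1, 2 * a.+1))%:R).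
Proof.
rewrite sl_su su_val sr_val pow2z.
have e1 : (2 * a.+1 = (2 * a).+2)%N by lia.
have e2 : (2 * a.+1 - 1 = (2 * a).+1)%N by lia.
have e3 : (2 * (j + a).+1 = (2 * (j + a)).+2)%N by lia.
rewrite e2 e1 e3.
have hb := @bin_fact (2 * (j + a)).+2 (2 * a).+2.
have e4 : ((2 * (j + a)).+2 - (2 * a).+2 = 2 * j)%N by lia.
rewrite e4 in hb.
have hC : ('C((2 * (j + a)).+2, (2 * a).+2))%:R =
   ((2 * (j + a)).+2%:R * ((2 * (j + a)).+1`!)%:R) / (((2 * a).+2`!)%:R * ((2 * j)`!)%:R) :> rat.
  have hb' : (('C((2 * (j + a)).+2, (2 * a).+2))%:R * (((2 * a).+2`!)%:R * ((2 * j)`!)%:R) : rat)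
     = (2 * (j + a)).+2%:R * ((2 * (j + a)).+1`!)%:R.
    by rewrite -!natrM hb ?factS //; lia.
  rewrite -hb'.
  have h1 := fact_neq0 (2 * a).+2; have h2 := fact_neq0 (2 * j).
  move: h1 h2; set x := ((2 * a).+2`!)%:R; set y := ((2 * j)`!)%:R; clearbody x y => h1 h2.
  by field; rewrite h1 h2.
rewrite hC /sbeta.
have -> : ((2 * (j + a)).+2%:R : rat) = 2 * (j + a).+1%:R.
  by rewrite -natrM; congr (_%:R); lia.
have -> : ((2 * a).+2%:R : rat) = 2 * a.+1%:R.
  by rewrite -natrM; congr (_%:R); lia.
rewrite exprS.
have h1 := fact_neq0 (2 * a).+2; have h2 := fact_neq0 (2 * j).
have h3 := fact_neq0 (2 * (j + a)).+1.
have h4 : ((j + a).+1%:R : rat) != 0 by rewrite pnatr_eq0.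
have h5 : (a.+1%:R : rat) != 0 by rewrite pnatr_eq0.
move: h1 h2 h3 h4 h5.
set x := ((2 * a).+2`!)%:R; set y := ((2 * j)`!)%:R; set z := ((2 * (j + a)).+1`!)%:R.
set u := (2 : rat) ^+ (2 * a).+1; set v := (2 : rat) ^+ (2 * j).
set P := ((j + a).+1%:R : rat); set A := (a.+1%:R : rat).
set B1 := bernoulli (2 * a).+2; set B2 := bernoulli (2 * j).
clearbody x y z u v P A B1 B2 => h1 h2 h3 h4 h5.
by field; rewrite h1 h2 h4 h5.
Qed.

Lemma st_even m : ~~ odd m -> st m = 0.
Proof.
move=> hm; rewrite /st /smul big1 // => i _.
have hi := ltn_ord i.
rewrite /ssh; case hoi: (odd i); last by rewrite mul0r.
rewrite /se euler_odd ?mul0r ?mulr0 //.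
by rewrite oddB ?hoi; [move: hm; case: (odd m) | lia].
Qed.

Lemma sum_evod (F : nat -> rat) q :
  \sum_(i < (2 * q)%N) F i = \sum_(j < q) (F (2 * j)%N + F (2 * j)%N.+1).
Proof.
elim: q => [|q IH]; first by rewrite !big_ord0.
have -> : (2 * q.+1 = (2 * q)%N.+2)%N by lia.
by rewrite !big_ord_recr /= IH addrA.
Qed.

Unset Implicit Arguments.
Theorem mainTheorem13 (n : nat) (hn : (1 <= n)%N) :
  \sum_(1 <= k < n.+1) euler (2 * k - 2) * euler (2 * n - 2 * k)
  = 2 / n%:R * \sum_(1 <= k < n.+1)
      bernoulli (2 * k) * bernoulli (2 * n - 2 * k) / k%:R
      * (2 ^+ (2 * k) - 1) * 2 ^+ (2 * k - 1)
      * (1 - (2 : rat) ^ ((2 * n - 2 * k)%:Z - 1))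
      * ('C(2 * n, 2 * k))%:R.
Proof.
case: n hn => // p _.
rewrite !big_add1 /= !big_mkord.
have -> : \sum_(k < p.+1) euler (2 * k.+1 - 2) * euler (2 * p.+1 - 2 * k.+1)
   = \sum_(i < (2 * p)%N.+1) euler i * euler (2 * p - i)%N.
  rewrite [LHS]big_ord_recr [RHS]big_ord_recr /= (sum_evod (fun i => euler i * euler (2 * p - i)%N)).
  congr (_ + _); last by congr (euler _ * euler _); lia.
  apply: eq_bigr => i _.
  rewrite (euler_odd (_ : odd (2 * i).+1)) ?mul0r ?addr0; last by rewrite /= oddM.
  have hi := ltn_ord i.
  by congr (euler _ * euler _); lia.
rewrite conv_formula.
rewrite (_ : ((2 * p).+2 = 2 * p.+1)%N); last by lia.
rewrite (sum_evod (fun i => sr i * sl ((2 * p).+1 - i)%N)).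
have -> : \sum_(j < p.+1) (sr (2 * j)%N * sl ((2 * p).+1 - 2 * j)%N
                           + sr (2 * j).+1 * sl ((2 * p).+1 - (2 * j).+1)%N)
        = \sum_(j < p.+1) sr (2 * j)%N * sl ((2 * p).+1 - 2 * j)%N.
  apply: eq_bigr => j _.
  rewrite /sl (@st_even ((2 * p).+1 - (2 * j).+1)%N) ?mul0r ?mulr0 ?addr0 //.
  have hj := ltn_ord j.
  by rewrite subSS -mulnBr oddM.
rewrite (reindex_inj rev_ord_inj) /= mulr_sumr mulr_sumr mulr_sumr.
apply: eq_bigr => -[i hi] _ /=.
have [j hj] : exists j, p = (j + i)%N by exists (p - i)%N; lia.
subst p.
rewrite (_ : (2 * (j + i).+1 - 2 * i.+1 = 2 * j)%N); last by lia.
rewrite (_ : (2 * ((j + i).+1 - i.+1) = 2 * j)%N); last by lia.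
rewrite (_ : ((2 * (j + i)).+1 - 2 * j = (2 * i).+1)%N); last by lia.
exact: term_eq.
Qed.
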